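(* Let $X$ be a compact metric space and $T:X\to X$ a surjective local homeomorphism such that $Sp_l(X,T)$ is finite and consists of isolated points of $X$. Then \[{\rm dad}(\mathcal{G}_{(X,T)})\le 2\,{\rm dim}_{\rm Rok}(X,T)+1.\]
   Context: $Sp_l(X,T)=\{x:|T^{-1}(\{x\})|\ge2\}$. $\mathcal{G}_{(X,T)}=\{(x,m-n,y): T^m(x)=T^n(y), m,n\in\mathbb{N}\}$ is the Deaconu–Renault groupoid (unit space $X$, $r(x,k,y)=x$, $s(x,k,y)=y$, standard étale topology). ${\rm dad}(\mathcal{G})$: least $d$ such that for every open relatively compact $K\subseteq\mathcal{G}$ there are open $U_0,\dots,U_d\subseteq\mathcal{G}^{(0)}$ covering $s(K)\cup r(K)$ with each $\{g\in K:s(g),r(g)\in U_i\}$ contained in a relatively compact subgroupoid. ${\rm dim}_{\rm Rok}(X,T)$: least $d$ such that for every $N\ge1$, $X$ is covered by the members of at most $d+1$ open $N$-Rokhlin towers, where an open $N$-Rokhlin tower is $\{U_0,\dots,U_{N-1}\}$ of nonempty open sets with $U_k=T^{-1}(U_{k-1})$ and pairwise disjoint closures. *)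

(* Defs.v *)
From HB Require Import structures.
From mathcomp Require Import all_boot all_order all_algebra.
From mathcomp Require Import all_classical all_reals all_analysis.

Set Implicit Arguments.
Unset Strict Implicit.
Unset Printing Implicit Defensive.
Import Order.TTheory GRing.Theory Num.Theory.
Local Open Scope classical_set_scope.

Section DR.
Variable X : topologicalType.

(** Local homeomorphism: continuous, and every point has an open
    neighbourhood on which T is injective and open (hence a homeomorphism
    onto an open image). *)
Definition local_homeomorphism (T : X -> X) : Prop :=
  continuous T /\
  forall x : X, exists U : set X,
    [/\ open U, U x, {in U &, injective T} &
        forall V : set X, open V -> V `<=` U -> open (T @` V)].

Definition Sp_l (T : X -> X) : set X :=
  [set x | exists y1 y2 : X, [/\ y1 <> y2, T y1 = x & T y2 = x]].

Definition gr (g : X * int * X) : X := g.1.1.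
Definition gs (g : X * int * X) : X := g.2.
Definition gdeg (g : X * int * X) : int := g.1.2.

Definition DRgroupoid (T : X -> X) : set (X * int * X) :=
  [set g | exists m n : nat,
     gdeg g = (m%:Z - n%:Z)%R /\ iter m T (gr g) = iter n T (gs g)].

Definition DRbasic (T : X -> X) (U : set X) (m n : nat) (V : set X)
  : set (X * int * X) :=
  [set g | [/\ U (gr g), V (gs g), gdeg g = (m%:Z - n%:Z)%R &
              iter m T (gr g) = iter n T (gs g)]].

Definition Gopen (T : X -> X) (A : set (X * int * X)) : Prop :=
  forall g, A g -> exists (U V : set X) (m n : nat),
    [/\ open U, open V, DRbasic T U m n V g & DRbasic T U m n V `<=` A].

Definition Gclosure (T : X -> X) (A : set (X * int * X)) : set (X * int * X) :=
  [set g | DRgroupoid T g /\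
     forall B, Gopen T B -> B g -> exists h, B h /\ A h].

Definition Gcompact (T : X -> X) (C : set (X * int * X)) : Prop :=
  C `<=` DRgroupoid T /\
  forall (I : Type) (F : I -> set (X * int * X)),
    (forall i, Gopen T (F i)) -> C `<=` \bigcup_i F i ->
    exists D : set I, finite_set D /\ C `<=` \bigcup_(i in D) F i.

Definition Grelcompact (T : X -> X) (A : set (X * int * X)) : Prop :=
  Gcompact T (Gclosure T A).

Definition subgroupoid (T : X -> X) (H : set (X * int * X)) : Prop :=
  [/\ H `<=` DRgroupoid T,
      (forall x k y l z, H (x, k, y) -> H (y, l, z) -> H (x, (k + l)%R, z)) &
      (forall x k y, H (x, k, y) -> H (y, (- k)%R, x))].

Definition dad_le (T : X -> X) (d : nat) : Prop :=
  forall K : set (X * int * X), K `<=` DRgroupoid T ->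
    Gopen T K -> Grelcompact T K ->
    exists U : nat -> set X,
      [/\ (forall i, (i <= d)%N -> open (U i)),
          (forall x, (gs @` K `|` gr @` K) x -> exists i, (i <= d)%N /\ U i x) &
          (forall i, (i <= d)%N -> exists H : set (X * int * X),
             [/\ subgroupoid T H, Grelcompact T H &
                 [set g | K g /\ U i (gs g) /\ U i (gr g)] `<=` H])].

Definition open_Rokhlin_tower (T : X -> X) (N : nat) (U : nat -> set X) : Prop :=
  [/\ (forall k, (k < N)%N -> open (U k) /\ U k !=set0),
      (forall k, (k.+1 < N)%N -> U k.+1 = T @^-1` (U k)) &
      (forall i j, (i < N)%N -> (j < N)%N -> i <> j ->
         closure (U i) `&` closure (U j) = set0)].

Definition dimRok_le (T : X -> X) (d : nat) : Prop :=
  forall N : nat, (1 <= N)%N ->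
    exists (p : nat) (tow : nat -> nat -> set X),
      [/\ (p <= d.+1)%N,
          (forall j, (j < p)%N -> open_Rokhlin_tower T N (tow j)) &
          (forall x : X, exists j k, [/\ (j < p)%N, (k < N)%N & tow j k x])].

End DR.

(* Main.v *)
Require Import Defs.
From HB Require Import structures.
From mathcomp Require Import all_boot all_order all_algebra.
From mathcomp Require Import all_classical all_reals all_analysis.
From mathcomp Require Import zify.
From mathcomp Require Import finmap.
Set Implicit Arguments.
Unset Strict Implicit.
Unset Printing Implicit Defensive.
Import Order.TTheory GRing.Theory Num.Theory.
Local Open Scope classical_set_scope.

Section Basics.
Context {X : topologicalType} (T : X -> X).
Hypothesis hX : hausdorff_space X.
Hypothesis lhT : local_homeomorphism T.

Lemma contT : continuous T.
Proof. by case: lhT. Qed.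

Lemma cont_iter n : continuous (iter n T).
Proof.
elim: n => [|n IH] x; first exact: cvg_id.
by apply: continuous_comp; [exact: IH | exact: contT].
Qed.

Lemma open_iter n U : open U -> open (iter n T @^-1` U).
Proof. by move=> oU; apply: open_comp => // x _; apply: cont_iter. Qed.

Lemma inj_iter n z : exists W : set X,
  [/\ open W, W z & {in W &, injective (iter n T)}].
Proof.
elim: n z => [|n IH] z.
  exists setT; split => //; first exact: openT.
have [W1 [oW1 W1z iW1]] := IH z.
have [U [oU Uz iU _]] := (lhT.2 (iter n T z)).
exists (W1 `&` iter n T @^-1` U); split.
- by apply: openI => //; apply: open_iter.
- by split.
move=> a b; rewrite !in_setE => -[Wa Ua] [Wb Ub] /= e.
apply: iW1; rewrite ?in_setE //.
by apply: iU; rewrite ?in_setE.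
Qed.

Lemma sep_points (x y : X) : x <> y ->
  exists A B : set X, [/\ open A, open B, A x, B y & forall z, A z -> B z -> False].
Proof.
move=> /eqP xy; move: hX; rewrite open_hausdorff => /(_ x y xy) [[A B]].
rewrite !in_setE /= => -[Ax By] [oA oB AB].
exists A, B; split => // z Az Bz.
idtac.
have : (A `&` B) z by []. by rewrite AB.
Qed.

Lemma closed1 (x : X) : closed [set x].
Proof. exact: accessible_closed_set1 (hausdorff_accessible hX) x. Qed.

Lemma shrink (U1 V1 : set X) m1 n1 m2 n2 x y :
  open U1 -> open V1 -> U1 x -> V1 y -> iter m1 T x = iter n1 T y ->
  (m1 <= m2)%N -> (m1 + n2 = m2 + n1)%N ->
  exists U V : set X, [/\ open U, open V, U x & V y] /\ [/\
     U `<=` U1, V `<=` V1 &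
     forall x' y', U x' -> V y' -> iter m2 T x' = iter n2 T y' ->
        iter m1 T x' = iter n1 T y'].
Proof.
move=> oU1 oV1 U1x V1y e lem e2.
pose j := (m2 - m1)%N.
have hm : m2 = (j + m1)%N by rewrite /j; lia.
have hn : n2 = (j + n1)%N by rewrite /j; lia.
have [W [oW Wz iW]] := inj_iter j (iter m1 T x).
exists (U1 `&` iter m1 T @^-1` W), (V1 `&` iter n1 T @^-1` W); split; split.
- by apply: openI => //; apply: open_iter.
- by apply: openI => //; apply: open_iter.
- by split.
- by split => //=; rewrite -e.
- by move=> ? [].
- by move=> ? [].
move=> x' y' [_ Wx] [_ Wy]; rewrite hm hn !iterD => ee.
by apply: iW; rewrite ?in_setE.
Qed.

End Basics.

Lemma openX' {X Y : topologicalType} (U : set X) (V : set Y) :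
  open U -> open V -> open (U `*` V).
Proof.
move=> oU oV; rewrite openE => p [Up Vp].
exists (U, V) => //=; split; apply: open_nbhs_nbhs; split => //.
Qed.

Section GTop.
Context {X : topologicalType} (T : X -> X).
Hypothesis hX : hausdorff_space X.
Hypothesis lhT : local_homeomorphism T.
Hypothesis cX : compact [set: X].

Local Notation G := (DRgroupoid T).

Definition Gclosed (C : set (X * int * X)) := forall g, G g -> ~ C g ->
  exists B, [/\ Gopen T B, B g & forall h, B h -> ~ C h].

Lemma G_basic U V m n g : DRbasic T U m n V g -> G g.
Proof. by case=> _ _ e1 e2; exists m, n. Qed.

Lemma Gopen_basic U V m n : open U -> open V -> Gopen T (DRbasic T U m n V).
Proof. by move=> oU oV g bg; exists U, V, m, n; split. Qed.

Lemma Gopen0 : Gopen T set0.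
Proof. by []. Qed.

Lemma basic_meet g U1 V1 m1 n1 U2 V2 m2 n2 :
  open U1 -> open V1 -> open U2 -> open V2 ->
  DRbasic T U1 m1 n1 V1 g -> DRbasic T U2 m2 n2 V2 g -> (m1 <= m2)%N ->
  exists U V, [/\ open U, open V & DRbasic T U m2 n2 V g] /\
    DRbasic T U m2 n2 V `<=` DRbasic T U1 m1 n1 V1 `&` DRbasic T U2 m2 n2 V2.
Proof.
move=> oU1 oV1 oU2 oV2 [u1 v1 d1 e1] [u2 v2 d2 e2] le.
have hmn : (m1 + n2 = m2 + n1)%N.
  have : (m1%:Z - n1%:Z = m2%:Z - n2%:Z)%R by rewrite -d1 -d2.
  by lia.
have [U [V [[oU oV Ux Vy] [sU sV imp]]]] := shrink lhT oU1 oV1 u1 v1 e1 le hmn.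
exists (U `&` U2), (V `&` V2); split; first split.
- exact: openI.
- exact: openI.
- by split.
move=> h [[Uh U2h] [Vh V2h] dh eh]; split; split => //.
- exact: sU.
- exact: sV.
- by rewrite dh; apply/eqP; rewrite subr_eq; apply/eqP; lia.
- exact: imp.
Qed.

Lemma GopenI B1 B2 : Gopen T B1 -> Gopen T B2 -> Gopen T (B1 `&` B2).
Proof.
move=> op1 op2 g [b1 b2].
have [U1 [V1 [m1 [n1 [oU1 oV1 g1 s1]]]]] := op1 g b1.
have [U2 [V2 [m2 [n2 [oU2 oV2 g2 s2]]]]] := op2 g b2.
case: (leqP m1 m2) => le.
  have [U [V [[oU oV gU] sUV]]] := basic_meet oU1 oV1 oU2 oV2 g1 g2 le.
  exists U, V, m2, n2; split => // h /sUV [/s1 ? /s2 ?]; by split.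
have [U [V [[oU oV gU] sUV]]] := basic_meet oU2 oV2 oU1 oV1 g2 g1 (ltnW le).
exists U, V, m1, n1; split => // h /sUV [/s2 ? /s1 ?]; by split.
Qed.

Lemma Gclosed_basic A B m n : closed A -> closed B -> Gclosed (DRbasic T A m n B).
Proof.
move=> cA cB g [m0 [n0 [d0 e0]]] nb.
have oCA : open (~` A) by rewrite openC.
have oCB : open (~` B) by rewrite openC.
case: (pselect (A (gr g))) => Ag; last first.
  exists (DRbasic T (~` A) m0 n0 setT); split.
  - by apply: Gopen_basic => //; exact: openT.
  - by split.
  by move=> h [? _ _ _] [].
case: (pselect (B (gs g))) => Bg; last first.
  exists (DRbasic T setT m0 n0 (~` B)); split.
  - by apply: Gopen_basic => //; exact: openT.
  - by split.
  by move=> h [_ ? _ _] [].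
case: (pselect (gdeg g = (m%:Z - n%:Z)%R)) => dg; last first.
  exists (DRbasic T setT m0 n0 setT); split.
  - by apply: Gopen_basic; exact: openT.
  - by split.
  by move=> h [_ _ dh _] [_ _ dh' _]; apply: dg; rewrite d0 -dh dh'.
have ne : iter m T (gr g) <> iter n T (gs g) by move=> e; apply: nb; split.
have [Wa [Wb [oWa oWb Wa1 Wb1 dis]]] := sep_points hX ne.
exists (DRbasic T (iter m T @^-1` Wa) m0 n0 (iter n T @^-1` Wb)); split.
- by apply: Gopen_basic; apply: open_iter.
- by split.
by move=> h [ha hb _ _] [_ _ _ eh]; apply: (dis _ ha); rewrite eh.
Qed.

Lemma GclosedU C1 C2 : Gclosed C1 -> Gclosed C2 -> Gclosed (C1 `|` C2).
Proof.
move=> c1 c2 g Gg n12.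
have [B1 [op1 b1 h1]] := c1 g Gg (fun c => n12 (or_introl c)).
have [B2 [op2 b2 h2]] := c2 g Gg (fun c => n12 (or_intror c)).
exists (B1 `&` B2); split; first exact: GopenI.
  by split.
by move=> h [/h1 ? /h2 ?] [].
Qed.

Lemma Gcompact0 : Gcompact T set0.
Proof. by split => // I F _ _; exists set0; split. Qed.

Lemma GcompactU C1 C2 : Gcompact T C1 -> Gcompact T C2 -> Gcompact T (C1 `|` C2).
Proof.
move=> [s1 c1] [s2 c2]; split; first by move=> g [/s1 | /s2].
move=> I F oF cov.
have [D1 [f1 sub1]] := c1 I F oF (fun g h => cov g (or_introl h)).
have [D2 [f2 sub2]] := c2 I F oF (fun g h => cov g (or_intror h)).
exists (D1 `|` D2); split; first by rewrite finite_setU.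
move=> g [/sub1 | /sub2] [i Di Fi]; exists i => //; by [left|right].
Qed.

End GTop.

Section PP.
Context {Y : topologicalType} (y0 : Y).
Definition PY : Type := Y.
HB.instance Definition _ := Topological.on PY.
HB.instance Definition _ := isPointed.Build PY y0.
Lemma cc_PY (A : set PY) : compact A -> cover_compact A.
Proof. by move=> cA; rewrite -(@compact_cover PY). Qed.
Lemma cc_gen (A : set Y) (f : Y -> set Y) : compact A ->
  (forall p, A p -> open (f p)) -> (forall p, A p -> f p p) ->
  exists S : set Y, [/\ finite_set S, S `<=` A & A `<=` \bigcup_(p in S) f p].
Proof.
move=> cA op cv.
have cv' : (A : set PY) `<=` cover A f by move=> p Ap; exists p => //; apply: cv.
have [D' sD' cD'] := @cc_PY A cA PY A f op cv'.
exists [set` D']; split.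
- exact: finite_fset.
- by move=> p pD; have := sD' p pD; rewrite in_setE.
- exact: cD'.
Qed.
End PP.

Section GTop2.
Context {X : topologicalType} (T : X -> X).
Hypothesis hX : hausdorff_space X.
Hypothesis lhT : local_homeomorphism T.
Hypothesis cX : compact [set: X].

Local Notation G := (DRgroupoid T).

Lemma closedP A B m n : closed A -> closed B ->
  closed [set p : X * X | [/\ A p.1, B p.2 & iter m T p.1 = iter n T p.2]].
Proof.
move=> cA cB; rewrite -[X in closed X]setCK closedC.
have oCA : open (~` A) by rewrite openC.
have oCB : open (~` B) by rewrite openC.
rewrite openE => p np; rewrite /interior.
case: (pselect (A p.1)) => Ap; last first.
  apply: (@filterS _ _ _ (~` A `*` setT)).
    by move=> q [? _] [].
  by apply: open_nbhs_nbhs; split => //; apply: openX' => //; exact: openT.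
case: (pselect (B p.2)) => Bp; last first.
  apply: (@filterS _ _ _ (setT `*` ~` B)).
    by move=> q [_ ?] [].
  by apply: open_nbhs_nbhs; split => //; apply: openX' => //; exact: openT.
have ne : iter m T p.1 <> iter n T p.2 by move=> e; apply: np; split.
have [Wa [Wb [oWa oWb Wa1 Wb1 dis]]] := sep_points hX ne.
apply: (@filterS _ _ _ ((iter m T @^-1` Wa) `*` (iter n T @^-1` Wb))).
  by move=> q [qa qb] [_ _ e]; apply: (dis _ qa); rewrite e.
apply: open_nbhs_nbhs; split => //.
by apply: openX'; apply: open_iter.
Qed.

Lemma Gcompact_basic A B m n : closed A -> closed B -> Gcompact T (DRbasic T A m n B).
Proof.
move=> cA cB; split; first by move=> g; apply: G_basic.
move=> I F oF cov.
have [[x0 _]|nX] := pselect (exists x : X, True); last first.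
  by exists set0; split => // g; exfalso; apply: nX; exists (gr g).
pose P := [set p : X * X | [/\ A p.1, B p.2 & iter m T p.1 = iter n T p.2]].
have cP : compact P.
  apply: (@subclosed_compact _ _ ([set: X] `*` [set: X])).
  - exact: closedP.
  - exact: compact_setX.
  - by [].
pose R (p : X * X) (y : option I * set (X * X)) :=
  P p -> exists i, [/\ y.1 = Some i, open y.2, y.2 p &
     forall q, y.2 q -> P q -> F i (q.1, (m%:Z - n%:Z)%R, q.2)].
have exR : forall p, exists y, R p y.
  move=> p; case: (pselect (P p)) => Pp; last by exists (None, set0).
  case: (Pp) => Ap Bp ep.
  have [i _ Fi] := cov (p.1, (m%:Z - n%:Z)%R, p.2) (And4 Ap Bp erefl ep).
  have [U [V [m' [n' [oU oV [Up Vp dp ep'] sF]]]]] := oF i _ Fi.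
  have hmn : (m' + n = m + n')%N.
    have : (m'%:Z - n'%:Z = m%:Z - n%:Z)%R by rewrite -dp.
    by lia.
  case: (leqP m' m) => le.
    have [U'' [V'' [[oU'' oV'' Up'' Vp''] [sU sV imp]]]] :=
      shrink lhT oU oV Up Vp ep' le hmn.
    exists (Some i, U'' `*` V''); move=> _; exists i; split => //.
    - exact: openX'.
    move=> q [q1 q2] [_ _ eq]; apply: sF; split => /=;
      first [exact: (sU _ q1) | exact: (sV _ q2) | exact: dp | exact: (imp _ _ q1 q2 eq)].
  exists (Some i, U `*` V); move=> _; exists i; split => //.
  - exact: openX'.
  move=> q [q1 q2] [_ _ eq]; apply: sF; split => //=.
  have -> : m' = ((m' - m) + m)%N by lia.
    have -> : n' = ((m' - m) + n)%N by lia.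
    by rewrite !iterD eq.
have [fy Hfy] := choice exR.
have opP : forall p, P p -> open (fy p).2.
  by move=> p Pp; have [i [_ o _ _]] := Hfy p Pp.
have covP : forall p, P p -> (fy p).2 p.
  by move=> p Pp; have [i [_ _ pp _]] := Hfy p Pp.
have [S [fS sSP covD']] := @cc_gen _ (x0, x0) P (fun p => (fy p).2) cP opP covP.
exists (Some @^-1` ((fun p => (fy p).1) @` S)); split.
  apply: finite_preimage; last exact: finite_image.
  by move=> a b _ _ [].
move=> [[x c] y] [/= Ax By dc exy].
have : P (x, y) by split.
move=> /covD' [p D'p fp].
have Pp : P p by apply: sSP.
have [i [e1 _ _ Fi]] := Hfy p Pp.
exists i; first by exists p => //.
have -> : c = (m%:Z - n%:Z)%R by exact: dc.
by apply: (Fi (x, y)) => //; split.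
Qed.

Lemma Gclosed_sub_compact C D : Gcompact T C -> Gclosed T D -> D `<=` C ->
  Gcompact T D.
Proof.
move=> [sC cC] clD sDC; split; first by move=> g /sDC /sC.
move=> I F oF cov.
pose R (g : X * int * X) (B : set (X * int * X)) :=
  [/\ Gopen T B, (forall h, B h -> ~ D h) & (C g -> ~ D g -> B g)].
have exR : forall g, exists B, R g B.
  move=> g; case: (pselect (C g /\ ~ D g)) => [[Cg nDg]|nn]; last first.
    by exists set0; split => // Cg nDg; exfalso; apply: nn.
  have [B [oB Bg hB]] := clD g (sC _ Cg) nDg.
  by exists B.
have [fB HfB] := choice exR.
pose F' (s : I + (X * int * X)) := match s with inl i => F i | inr g => fB g end.
have oF' : forall s, Gopen T (F' s) by case => [i|g] //=; case: (HfB g).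
have covC : C `<=` \bigcup_s F' s.
  move=> g Cg; case: (pselect (D g)) => [Dg|nDg].
    by have [i _ Fi] := cov g Dg; exists (inl i).
  by exists (inr g) => //; case: (HfB g) => _ _; apply.
have [D' [fD' sub]] := cC _ F' oF' covC.
exists (inl @^-1` D'); split.
  by apply: finite_preimage => // a b _ _ [].
move=> g Dg; have [[i|h] D'i Fi] := sub g (sDC _ Dg).
  by exists i.
by exfalso; case: (HfB h) => _ nD _; apply: (nD g Fi Dg).
Qed.

End GTop2.

Section GTop3.
Context {X : topologicalType} (T : X -> X).
Hypothesis hX : hausdorff_space X.
Hypothesis lhT : local_homeomorphism T.
Hypothesis cX : compact [set: X].

Local Notation G := (DRgroupoid T).

Lemma Gclosed_closure H : Gclosed T (Gclosure T H).
Proof.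
move=> g Gg nCl; apply: contrapT => nB; apply: nCl; split => // B oB Bg.
apply: contrapT => nh; apply: nB; exists B; split => // h Bh [Gh hB].
by have [h' [Bh' Hh']] := hB B oB Bh; apply: nh; exists h'.
Qed.

Lemma Gclosure_sub H C : Gclosed T C -> H `<=` C -> Gclosure T H `<=` C.
Proof.
move=> cC sHC g [Gg hg]; apply: contrapT => nC.
have [B [oB Bg nB]] := cC g Gg nC.
by have [h [Bh Hh]] := hg B oB Bg; apply: (nB h Bh (sHC _ Hh)).
Qed.

Lemma relcompact_of H C : Gcompact T C -> Gclosed T C -> H `<=` C ->
  Grelcompact T H.
Proof.
move=> cC clC sHC.
apply: (Gclosed_sub_compact cC); [exact: Gclosed_closure | exact: Gclosure_sub clC sHC].
Qed.

Lemma Gclosed0 : Gclosed T set0.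
Proof.
move=> g [m [n [d e]]] _; exists (DRbasic T setT m n setT).
split; [by apply: Gopen_basic; exact: openT | exact: (And4 Logic.I Logic.I d e) | by move=> h _ []].
Qed.

Definition Gok C := Gcompact T C /\ Gclosed T C.

Lemma Gok_basic A B m n : closed A -> closed B -> Gok (DRbasic T A m n B).
Proof.
move=> cA cB; split; first exact: Gcompact_basic.
exact: Gclosed_basic.
Qed.

Lemma Gok_fin (I : eqType) (D : set I) (F : I -> set (X * int * X)) :
  finite_set D -> (forall i, D i -> Gok (F i)) -> Gok (\bigcup_(i in D) F i).
Proof.
move=> /finite_seqP [s ->]; elim: s => [|a s IH] hF.
  have -> : \bigcup_(i in [set` [::]]) F i = set0.
    by apply/seteqP; split => // g [i].
  by split; [exact: Gcompact0 | exact: Gclosed0].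
have -> : \bigcup_(i in [set` a :: s]) F i = F a `|` \bigcup_(i in [set` s]) F i.
  apply/seteqP; split => g.
    by move=> [i /=]; rewrite in_cons => /orP [/eqP ->|iS] Fi; [left|right; exists i].
  by move=> [Fa|[i /= iS Fi]]; [exists a => //=; rewrite mem_head|exists i => //=; rewrite in_cons iS orbT].
have [c1 cl1] : Gok (F a) by apply: hF => /=; rewrite mem_head.
have [c2 cl2] : Gok (\bigcup_(i in [set` s]) F i).
  by apply: IH => i /= iS; apply: hF => /=; rewrite in_cons iS orbT.
by split; [exact: GcompactU | exact: GclosedU].
Qed.

Lemma GokU A B : Gok A -> Gok B -> Gok (A `|` B).
Proof. by move=> [? ?] [? ?]; split; [exact: GcompactU | exact: GclosedU]. Qed.

End GTop3.

Section Dyn.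
Context {X : topologicalType} (T : X -> X).
Hypothesis hX : hausdorff_space X.
Hypothesis lhT : local_homeomorphism T.
Hypothesis cX : compact [set: X].

Local Notation G := (DRgroupoid T).

Lemma tower_iter N U (TW : open_Rokhlin_tower T N U) k a x :
  (k + a < N)%N -> U (k + a)%N x <-> U k (iter a T x).
Proof.
elim: a x => [|a IH] x h; first by rewrite addn0.
case: TW => _ TW _.
rewrite addnS (TW (k + a)%N); last lia.
rewrite /preimage /= (IH (T x)); last lia.
by rewrite -iterSr.
Qed.

Lemma tower_disj N U (TW : open_Rokhlin_tower T N U) i j x :
  (i < N)%N -> (j < N)%N -> U i x -> U j x -> i = j.
Proof.
move=> iN jN Ui Uj; apply: contrapT => ij.
case: TW => _ _ /(_ i j iN jN ij) dis.
have : (closure (U i) `&` closure (U j)) x by split; apply: subset_closure.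
by rewrite dis.
Qed.

Lemma iter_comm a b x : iter a T (iter b T x) = iter b T (iter a T x).
Proof. by rewrite -!iterD addnC. Qed.

Lemma no_periodic d (dR : dimRok_le T d) x t :
  (0 < t)%N -> iter t T x = x -> False.
Proof.
move=> t0 per.
have [p [tow [_ tws cv]]] := dR t.+1 isT.
have [j [k [jp kN twk]]] := cv x.
have TW := tws j jp.
have q0 : tow j 0%N (iter k T x).
  by apply/(tower_iter TW) => //.
have qt : tow j t (iter k T x).
  apply/(tower_iter TW (k := 0%N)) => //.
  by rewrite iter_comm per.
have := tower_disj TW (isT : (0 < t.+1)%N) (ltnSn t) q0 qt; lia.
Qed.

Lemma iter_inj_pt d (dR : dimRok_le T d) x a b :
  iter a T x = iter b T x -> a = b.
Proof.
wlog le : a b / (a <= b)%N.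
  move=> H e; case: (leqP a b) => ab; first exact: H.
  by apply/esym/H => //; apply: ltnW.
move=> e; apply: contrapT => ne.
apply: (no_periodic dR (x := iter a T x) (t := (b - a)%N)); first lia.
by rewrite -iterD subnK // e.
Qed.

Lemma Gcomp x k y l z : G (x, k, y) -> G (y, l, z) -> G (x, (k + l)%R, z).
Proof.
move=> [m [n [dk ek]]] [m' [n' [dl el]]].
rewrite /gdeg /gr /gs /= in dk ek dl el.
exists (m + m')%N, (n + n')%N; rewrite /gdeg /gr /gs /=; split.
  by rewrite dk dl; lia.
rewrite [(m + m')%N]addnC iterD ek iter_comm el -iterD.
by [].
Qed.

Lemma Ginv x k y : G (x, k, y) -> G (y, (- k)%R, x).
Proof.
move=> [m [n [dk ek]]]; rewrite /gdeg /gr /gs /= in dk ek.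
exists n, m; rewrite /gdeg /gr /gs /=; split.
  by rewrite dk; lia.
by rewrite ek.
Qed.

Lemma deg_unique d (dR : dimRok_le T d) x c c' y :
  G (x, c, y) -> G (x, c', y) -> c = c'.
Proof.
move=> [m [n [dk ek]]] [m' [n' [dk' ek']]].
rewrite /gdeg /gr /gs /= in dk ek dk' ek'.
have : iter (m + n')%N T x = iter (n + m')%N T x.
  have e1 : iter (m + n')%N T x = iter n T (iter n' T y).
    by rewrite addnC iterD ek iter_comm.
  by rewrite e1 iterD ek'.
move/(iter_inj_pt dR) => h.
by rewrite dk dk'; lia.
Qed.

Lemma collision a w u : iter a T w = iter a T u -> w <> u ->
  exists i, [/\ (i < a)%N, iter i T w <> iter i T u & T (iter i T w) = T (iter i T u)].
Proof.
elim: a => [|a IH] /= e ne; first by [].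
case: (pselect (iter a T w = iter a T u)) => ea.
  by have [i [ia ni ei]] := IH ea ne; exists i; split => //; lia.
by exists a; split.
Qed.

Lemma finpre j z : finite_set [set y | iter j T y = z].
Proof.
have [[x0 _]|nX] := pselect (exists x : X, True); last first.
  by apply: (sub_finite_set (B := set0)) => // y _; apply: nX; exists y.
pose S := [set y | iter j T y = z].
have cS : closed S.
  rewrite -[S]setCK closedC openE => y /= nS; rewrite /interior.
  have [Wa [Wb [oWa oWb Wa1 Wb1 dis]]] := sep_points hX nS.
  apply: (@filterS _ _ _ (iter j T @^-1` Wa)).
    by move=> y' Wy' /= e; apply: (dis z) => //; rewrite -e.
  apply: open_nbhs_nbhs; split => //; exact: open_iter.
have cpS : compact S by apply: (subclosed_compact cS cX).
have ex : forall y, exists W : set X, [/\ open W, W y & {in W &, injective (iter j T)}].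
  by move=> y; apply: inj_iter.
have [fW HfW] := choice ex.
have [D [fD sDS cov]] := @cc_gen _ x0 S fW cpS
  (fun p _ => let: And3 o _ _ := HfW p in o) (fun p _ => let: And3 _ w _ := HfW p in w).
apply: (sub_finite_set (B := \bigcup_(p in D) (fW p `&` S))).
  by move=> y Sy; have [p Dp Wy] := cov y Sy; exists p.
apply: bigcup_finite => // p Dp.
case: (pselect (exists y, (fW p `&` S) y)) => [[y [Wy Sy]]|ne].
  apply: (sub_finite_set (B := [set y])); last exact: finite_set1.
  move=> y' [Wy' Sy']; have [_ _ inj] := HfW p.
  by apply: inj; rewrite ?in_setE // Sy Sy'.
by apply: (sub_finite_set (B := set0)) => // y' Wy'; apply: ne; exists y'.
Qed.

End Dyn.

Section Tower.
Context {X : topologicalType} (T : X -> X).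
Hypothesis hX : hausdorff_space X.
Hypothesis lhT : local_homeomorphism T.
Hypothesis cX : compact [set: X].
Variable d : nat.
Hypothesis dR : dimRok_le T d.
Hypothesis finS : finite_set (Sp_l T).
Variable M : nat.
Local Notation N := (M.*2.+1).
Variable tw : nat -> set X.
Hypothesis TW : open_Rokhlin_tower T N tw.

Local Notation G := (DRgroupoid T).

Definition Lp := [set g : X * int * X | exists k l,
  [/\ (k < N)%N, (l < N)%N, tw k (gr g) & tw l (gs g)] /\
  gdeg g = (k%:Z - l%:Z)%R /\ iter (k + M) T (gr g) = iter (l + M) T (gs g)].

Lemma Lp_G g : Lp g -> G g.
Proof.
move=> [k [l [_ [dg eg]]]]; exists (k + M)%N, (l + M)%N; split => //.
by rewrite dg; lia.
Qed.

Lemma Lp_comp x a y b z : Lp (x, a, y) -> Lp (y, b, z) -> Lp (x, (a + b)%R, z).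
Proof.
move=> [k [l [[kN lN tk tl] [da ea]]]] [k' [l' [[kN' lN' tk' tl'] [db eb]]]].
rewrite /gr /gs /gdeg /= in tk tl da ea tk' tl' db eb.
have lk : l = k' by apply: (tower_disj TW lN kN' tl tk').
subst k'.
exists k, l'; split; first by split.
rewrite /gr /gs /gdeg /=; split; first by rewrite da db; lia.
by rewrite ea eb.
Qed.

Lemma Lp_inv x a y : Lp (x, a, y) -> Lp (y, (- a)%R, x).
Proof.
move=> [k [l [[kN lN tk tl] [da ea]]]].
rewrite /gr /gs /gdeg /= in tk tl da ea.
exists l, k; split; first by split.
rewrite /gr /gs /gdeg /=; split; first by rewrite da; lia.
by rewrite ea.
Qed.

Lemma Lp_refl x k : (k < N)%N -> tw k x -> Lp (x, 0%R, x).
Proof.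
move=> kN tk; exists k, k; split; first by split.
by rewrite /gdeg /=; split => //; rewrite subrr.
Qed.

Definition F0 := [set x | (exists2 k, (k < N)%N & tw k x) /\
  exists2 c, (c <= M)%N & Sp_l T (iter c T x)].
Definition R0 := [set y | exists x a b,
  [/\ F0 x, (a <= M)%N, (b <= M)%N & iter a T x = iter b T y]].
Definition Rs := [set z | exists c y, R0 y /\ Lp (z, c, y)].
Definition Eset := [set g : X * int * X | G g /\ Rs (gr g) /\ Rs (gs g)].
Definition Hset := Lp `|` Eset.

Lemma Rs_sat x c y : Lp (x, c, y) -> Rs y -> Rs x.
Proof.
move=> L [c' [y0 [R0y0 L']]]; exists (c + c')%R, y0; split => //.
exact: Lp_comp L L'.
Qed.

Lemma H_sub : subgroupoid T Hset.
Proof.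
split.
- by move=> g [/Lp_G|[]].
- move=> x k y l z [L1|[G1 [R1x R1y]]] [L2|[G2 [R2y R2z]]].
  + by apply: or_introl; apply: (Lp_comp L1 L2).
  + right; split; first exact: Gcomp (Lp_G L1) G2.
    by split => //=; apply: (Rs_sat L1).
  + right; split; first exact: Gcomp G1 (Lp_G L2).
    by split => //=; apply: (Rs_sat (Lp_inv L2)).
  + right; split; first exact: Gcomp G1 G2.
    by split.
- move=> x k y [L|[G1 [R1 R2]]]; first by left; apply: Lp_inv.
  by right; split; [exact: Ginv | split].
Qed.

Lemma F0_fin : finite_set F0.
Proof.
apply: (sub_finite_set (B := \bigcup_(c in `I_(M.+1)) \bigcup_(s in Sp_l T)
   [set x | iter c T x = s])).
  by move=> x [_ [c cM Sc]]; exists c => //=; exists (iter c T x).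
apply: bigcup_finite; first exact: finite_II.
move=> c _; apply: bigcup_finite => // s _; exact: finpre.
Qed.

Lemma R0_fin : finite_set R0.
Proof.
apply: (sub_finite_set (B := \bigcup_(x in F0) \bigcup_(ab in `I_(M.+1) `*` `I_(M.+1))
   [set y | iter ab.2 T y = iter ab.1 T x])).
  move=> y [x [a [b [Fx aM bM e]]]]; exists x => //; exists (a, b).
    by split => /=; rewrite ltnS.
  by rewrite /= e.
apply: bigcup_finite; first exact: F0_fin.
move=> x _; apply: bigcup_finite; first by apply: finite_setX; exact: finite_II.
move=> ab _; exact: finpre.
Qed.

Lemma Rs_fin : finite_set Rs.
Proof.
apply: (sub_finite_set (B := \bigcup_(y in R0) \bigcup_(kl in `I_N `*` `I_N)
   [set z | iter (kl.1 + M) T z = iter (kl.2 + M) T y])).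
  move=> z [c [y [R0y [k [l [[kN lN _ _] [_ e]]]]]]].
  by exists y => //; exists (k, l) => //.
apply: bigcup_finite; first exact: R0_fin.
move=> y _; apply: bigcup_finite; first by apply: finite_setX; exact: finite_II.
move=> kl _; exact: finpre.
Qed.

Lemma Eset_fin : finite_set Eset.
Proof.
have ex : forall p : X * X, exists c : int, (exists c', G (p.1, c', p.2)) -> G (p.1, c, p.2).
  move=> p; case: (pselect (exists c', G (p.1, c', p.2))) => [[c' Gc]|nn].
    by exists c'.
  by exists 0%R => h; exfalso; apply: nn.
have [dg Hdg] := choice ex.
apply: (sub_finite_set (B := (fun p : X * X => (p.1, dg p, p.2)) @` (Rs `*` Rs))).
  move=> [[x c] y] [Gg [Rx Ry]]; exists (x, y) => //=.
  have Gd : G (x, dg (x, y), y) by apply: (Hdg (x, y)); exists c.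
  by rewrite (deg_unique dR Gd Gg).
by apply: finite_image; apply: finite_setX; exact: Rs_fin.
Qed.

Lemma H_relcomp : Grelcompact T Hset.
Proof.
have ex : forall g : X * int * X, exists mn : nat * nat, G g ->
    gdeg g = (mn.1%:Z - mn.2%:Z)%R /\ iter mn.1 T (gr g) = iter mn.2 T (gs g).
  move=> g; case: (pselect (G g)) => [[m [n [e1 e2]]]|nG].
    by exists (m, n).
  by exists (0, 0)%N.
have [mn Hmn] := choice ex.
pose C1 := \bigcup_(kl in `I_N `*` `I_N)
   DRbasic T (closure (tw kl.1)) (kl.1 + M) (kl.2 + M) (closure (tw kl.2)).
pose C2 := \bigcup_(g in Eset) DRbasic T [set gr g] (mn g).1 (mn g).2 [set gs g].
have ok1 : Gok T C1.
  rewrite /C1; apply: Gok_fin; [exact: lhT | by apply: finite_setX; exact: finite_II | ].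
  by move=> kl _; apply: Gok_basic => //; exact: closed_closure.
have ok2 : Gok T C2.
  rewrite /C2; apply: Gok_fin; [exact: lhT | exact: Eset_fin | ].
  by move=> g _; apply: Gok_basic => //; exact: closed1.
have [c12 cl12] := GokU lhT ok1 ok2.
apply: (relcompact_of c12 cl12).
move=> g [Lg|Eg].
  left; case: Lg => k [l [[kN lN tk tl] [dg eg]]].
  exists (k, l); first by split.
  split => /=.
  - exact: subset_closure.
  - exact: subset_closure.
  - by rewrite dg; lia.
  - exact: eg.
right; exists g => //.
have [e1 e2] := Hmn g Eg.1.
by split.
Qed.

Lemma tw_down k a x : (a <= k)%N -> (k < N)%N -> tw k x -> tw (k - a) (iter a T x).
Proof.
move=> ak kN tk; apply/(tower_iter TW); first by rewrite subnK.
by rewrite subnK.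
Qed.

Lemma tw_up k a x : (k + a < N)%N -> tw k (iter a T x) -> tw (k + a) x.
Proof. by move=> h t; apply: (proj2 (tower_iter TW x h)). Qed.

Lemma Hi_in g a b k l : (a <= M)%N -> (b <= M)%N ->
  gdeg g = (a%:Z - b%:Z)%R -> iter a T (gr g) = iter b T (gs g) ->
  (M <= k)%N -> (k < N)%N -> (M <= l)%N -> (l < N)%N ->
  tw k (gr g) -> tw l (gs g) -> Lp g.
Proof.
move=> aM bM dg eg Mk kN Ml lN tk tl.
have t1 := tw_down (k:=k) (a:=a) (x:=gr g) (ltac:(lia)) kN tk.
have t2 := tw_down (k:=l) (a:=b) (x:=gs g) (ltac:(lia)) lN tl.
rewrite eg in t1.
have kk : (k - a = l - b)%N.
  by apply: (tower_disj TW _ _ t1 t2); lia.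
exists k, l; split; first by split.
split; first by rewrite dg; lia.
have -> : (k + M = (k - a + M) + a)%N by lia.
rewrite iterD eg -iterD.
by have -> : (k - a + M + b = l + M)%N by lia.
Qed.

Lemma lo_aux x y k l a b : (k <= M)%N -> (l <= M)%N -> (a <= k)%N -> (b <= M)%N ->
  tw k x -> tw l y -> iter a T x = iter b T y ->
  l = (k - a + b)%N /\ iter (k + M) T x = iter (l + M) T y.
Proof.
move=> kM lM ak bM tk tl e.
have t1 := tw_down (k:=k) (a:=a) (x:=x) ak (ltac:(lia)) tk.
rewrite e in t1.
have t2 := tw_up (k:=(k - a)) (a:=b) (x:=y) (ltac:(lia)) t1.
have ll : l = (k - a + b)%N by apply: (tower_disj TW _ _ tl t2); lia.
split => //.
have -> : (k + M = (k - a + M) + a)%N by lia.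
rewrite iterD e -iterD.
by have -> : (k - a + M + b = l + M)%N by lia.
Qed.

Lemma bad_aux w v al be : tw 0 w -> tw 0 v -> (be <= M)%N -> (al < be)%N ->
  iter al T w = iter be T v -> exists i, (i < al)%N /\ Sp_l T (T (iter i T w)).
Proof.
move=> t0w t0v bM ab e.
pose u := iter (be - al) T v.
have eu : iter al T u = iter be T v by rewrite /u -iterD subnKC //; lia.
have wu : w <> u.
  move=> wu; rewrite wu in t0w.
  have := tw_up (k:=0%N) (a:=(be - al)%N) (x:=v) (ltac:(lia)) t0w.
  rewrite add0n => t1.
  have : 0%N = (be - al)%N by apply: (tower_disj TW _ _ t0v t1); lia.
  lia.
have [i [ia ne ee]] := collision (a := al) (w := w) (u := u) (etrans e (esym eu)) wu.
by exists i; split => //; exists (iter i T w), (iter i T u); split.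
Qed.

Lemma Lo_in g a b k l : (a <= M)%N -> (b <= M)%N ->
  gdeg g = (a%:Z - b%:Z)%R -> iter a T (gr g) = iter b T (gs g) ->
  (k <= M)%N -> (l <= M)%N -> tw k (gr g) -> tw l (gs g) -> Hset g.
Proof.
case: g => [[x c] y]; rewrite /gdeg /gr /gs /=.
move=> aM bM dg eg kM lM tk tl.
have kN : (k < N)%N by lia.
have lN : (l < N)%N by lia.
have Gg : G (x, c, y) by exists a, b.
case: (leqP a k) => ak.
  have [ll ei] := lo_aux kM lM ak bM tk tl eg.
  left; exists k, l; split; first by split.
  by split; [rewrite /gdeg /= dg; lia | exact: ei].
case: (leqP b l) => bl.
  have [kk ei] := lo_aux lM kM bl aM tl tk (esym eg).
  left; exists k, l; split; first by split.
  by split; [rewrite /gdeg /= dg; lia | rewrite /= ei].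
have t0w : tw 0 (iter k T x).
  by have := tw_down (k:=k) (a:=k) (x:=x) (leqnn k) kN tk; rewrite subnn.
have t0v : tw 0 (iter l T y).
  by have := tw_down (k:=l) (a:=l) (x:=y) (leqnn l) lN tl; rewrite subnn.
have ew : iter (a - k) T (iter k T x) = iter a T x by rewrite -iterD subnK //; lia.
have ev : iter (b - l) T (iter l T y) = iter b T y by rewrite -iterD subnK //; lia.
have E : iter (a - k) T (iter k T x) = iter (b - l) T (iter l T y) by rewrite ew ev.
have R0x_of : F0 x -> R0 x by move=> Fx; exists x, 0%N, 0%N; split.
have R0y_of : F0 y -> R0 y by move=> Fy; exists y, 0%N, 0%N; split.
have Rs_of : forall z j, (j < N)%N -> tw j z -> R0 z -> Rs z.
  by move=> z j jN tj Rz; exists 0%R, z; split => //; apply: (Lp_refl jN tj).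
case: (ltngtP (a - k) (b - l)) => cmp.
- have bM' : (b - l <= M)%N by lia.
  have [i [ia Si]] := bad_aux t0w t0v bM' cmp E.
  have Fx : F0 x.
    split; first by exists k.
    exists (i.+1 + k)%N; first by lia.
    by rewrite iterD.
  right; split => //; split => /=.
  + exact: (Rs_of x k kN tk (R0x_of Fx)).
  + by apply: (Rs_of y l lN tl); exists x, a, b; split.
- have aM' : (a - k <= M)%N by lia.
  have [i [ia Si]] := bad_aux t0v t0w aM' cmp (esym E).
  have Fy : F0 y.
    split; first by exists l.
    exists (i.+1 + l)%N; first by lia.
    by rewrite iterD.
  right; split => //; split => /=.
  + by apply: (Rs_of x k kN tk); exists y, b, a; split => //; exact: esym.
  + exact: (Rs_of y l lN tl (R0y_of Fy)).
- left; exists k, l; split; first by split.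
  split; first by rewrite /gdeg /= dg; lia.
  rewrite /gr /gs /=.
  have -> : (k + M = (M - (a - k)) + a)%N by lia.
  rewrite iterD eg -iterD.
  by have -> : (M - (a - k) + b = l + M)%N by lia.
Qed.

End Tower.

Lemma foldr_max_bound (s : seq (nat * nat)) ab : ab \in s ->
  (ab.1 + ab.2 <= foldr (fun ab acc => maxn (ab.1 + ab.2) acc) 0 s)%N.
Proof.
elim: s => //= c s IH; rewrite in_cons => /orP [/eqP ->|/IH]; lia.
Qed.

Theorem theorem5p12 (R : realType) (X : pseudoMetricType R)
  (T : X -> X) :
  hausdorff_space X -> compact [set: X] ->
  (forall y : X, exists x : X, T x = y) -> local_homeomorphism T ->
  finite_set (Sp_l T) -> (forall x, Sp_l T x -> open [set x]) ->
  forall d : nat, dimRok_le T d -> dad_le T (2 * d).+1.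
Proof.
move=> hX cX _ lhT finS _ d dR K sK oK rK.
have [M HM] : exists M, forall g, K g -> exists a b,
    [/\ (a <= M)%N, (b <= M)%N, gdeg g = (a%:Z - b%:Z)%R &
        iter a T (gr g) = iter b T (gs g)].
  case: rK => sCl cCl.
  have KCl : K `<=` Gclosure T K.
    by move=> g Kg; split; [exact: sK | move=> B _ Bg; exists g].
  have covCl : Gclosure T K `<=`
      \bigcup_(ab : nat * nat) DRbasic T setT ab.1 ab.2 setT.
    move=> g [Gg _]; case: Gg => m [n [e1 e2]]; exists (m, n) => //.
  have [D [fD covD]] := cCl (nat * nat)%type
      (fun ab => DRbasic T setT ab.1 ab.2 setT)
      (fun ab => Gopen_basic (T := T) (m := ab.1) (n := ab.2) openT openT) covCl.
  move/finite_seqP: fD => [s Ds].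
  exists (foldr (fun ab acc => maxn (ab.1 + ab.2) acc) 0 s) => g Kg.
  have [ab Dab [_ _ e1 e2]] := covD g (KCl _ Kg).
  have := foldr_max_bound (ab := ab) (s := s).
  rewrite Ds in Dab; move=> /(_ Dab) hb.
  move: hb; set B := foldr _ _ _ => hb.
  exists ab.1, ab.2; split => //; apply: leq_trans hb; [exact: leq_addr | exact: leq_addl].
have [p [tow [pd tws cv]]] := dR (M.*2.+1) isT.
pose Lo j := \bigcup_(k in [set k | (k <= M)%N]) tow j k.
pose Hi j := \bigcup_(k in [set k | (M <= k)%N && (k < M.*2.+1)%N]) tow j k.
pose Uf i := if (i./2 < p)%N then (if odd i then Lo i./2 else Hi i./2) else set0.
exists Uf; split.
- move=> i _; rewrite /Uf; case: ifP => ip; last exact: open0.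
  case: (tws _ ip) => hop _ _.
  case: ifP => _; apply: bigcup_open => k /= hk; apply: (hop k _).1; lia.
- move=> x _; have [j [k [jp kN tk]]] := cv x.
  case: (leqP k M) => kM.
    exists (j.*2.+1); split; first lia.
    have h1 : (j.*2.+1)./2 = j by rewrite /= uphalf_double.
    have o1 : odd j.*2.+1 by rewrite /= odd_double.
    by rewrite /Uf h1 o1 jp; exists k.
  exists (j.*2); split; first lia.
  have h1 : (j.*2)./2 = j by rewrite doubleK.
  have o1 : odd j.*2 = false by rewrite odd_double.
  rewrite /Uf h1 o1 jp; exists k => //=.
  by rewrite (ltnW kM) kN.
move=> i id; case: (ltnP i./2 p) => ip.
  have TW := tws _ ip.
  exists (Hset T M (tow i./2)); split.
  - exact: H_sub.
  - exact: (H_relcomp hX lhT cX dR finS M (tow i./2)).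
  move=> g [Kg [Us Ur]]; have [a [b [aM bM dg eg]]] := HM g Kg.
  move: Us Ur; rewrite /Uf ip; case: ifP => _ [l hl tl] [k hk tk].
    by apply: (Lo_in TW aM bM dg eg hk hl tk tl).
  left; move: hk hl => /= /andP [Mk kN] /andP [Ml lN].
  exact: (Hi_in TW aM bM dg eg Mk kN Ml lN tk tl).
exists set0; split.
- by split => // [x k y l z []|x k y []].
- apply: (relcompact_of (C := set0)) => //.
  + exact: Gcompact0.
  + exact: Gclosed0.
by move=> g [_ [Us _]]; move: Us; rewrite /Uf ltnNge ip.
Qed.
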